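(* Let $a<b$ be elements of $\mathcal{C}_n$ and let $Id\left(\mathcal{STR}^{(n)}\{a,b\}\right)=\{a_\ell b_{n-\ell}:\ a+1\le\ell\le b\}$. Then $Id\left(\mathcal{STR}^{(n)}\{a,b\}\right)$ is a subsemiring of $\mathcal{STR}^{(n)}\{a,b\}$ which consists exactly of the (multiplicatively) idempotent elements of $\mathcal{STR}^{(n)}\{a,b\}$ different from $\overline{a}$ and $\overline{b}$, and it has $b-a$ elements.
   Context: $\mathcal{C}_n=\{0,1,\dots,n-1\}$ with its usual order; $\widehat{\mathcal{E}}_{\mathcal{C}_n}$ is the set of all order-preserving maps $\mathcal{C}_n\to\mathcal{C}_n$ (not required to fix $0$), a semiring with $(\alpha+\beta)(x)=\max(\alpha(x),\beta(x))$ and $(\alpha\cdot\beta)(x)=\beta(\alpha(x))$. The string $\mathcal{STR}^{(n)}\{a,b\}$ is the set of $\alpha\in\widehat{\mathcal{E}}_{\mathcal{C}_n}$ with image in $\{a,b\}$; its elements are written $a_kb_{n-k}$ ($0\le k\le n$), the map sending $0,\dots,k-1$ to $a$ and $k,\dots,n-1$ to $b$; $\overline{a}$, $\overline{b}$ are the constant maps. *)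

(* Defs.v *)
From mathcomp Require Import all_boot all_order.
Set Implicit Arguments. Unset Strict Implicit. Unset Printing Implicit Defensive.

(* Maps C_n -> C_n, C_n = 'I_n = {0,...,n-1}. *)
Notation endo n := {ffun 'I_n -> 'I_n}.

Definition Ehat (n : nat) : {set endo n} :=
  [set f : endo n | [forall x : 'I_n, forall y : 'I_n, (x <= y)%N ==> (f x <= f y)%N]].

Definition addE (n : nat) (f g : endo n) : endo n :=
  [ffun x => if (f x <= g x)%N then g x else f x].

Definition mulE (n : nat) (f g : endo n) : endo n := [ffun x => g (f x)].

Definition STR (n : nat) (a b : 'I_n) : {set endo n} :=
  [set f in Ehat n | [forall x, (f x == a) || (f x == b)]].

(* a_k b_{n-k}: sends 0..k-1 to a and k..n-1 to b. *)
Definition str_ab (n : nat) (a b : 'I_n) (k : nat) : endo n :=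
  [ffun x : 'I_n => if (x < k)%N then a else b].

Definition cst (n : nat) (c : 'I_n) : endo n := [ffun _ => c].

Definition IdSTR (n : nat) (a b : 'I_n) : {set endo n} :=
  [set str_ab a b l | l : 'I_n.+1 & (a.+1 <= l <= b)%N].

Definition subsemiring (n : nat) (S T : {set endo n}) : Prop :=
  [/\ S \subset T,
      {in S &, forall f g, addE f g \in S} &
      {in S &, forall f g, mulE f g \in S}].

(* Main.v *)
Require Import Defs.
From mathcomp Require Import all_boot all_order.
From mathcomp Require Import zify.

Lemma str_in_STR n (a b : 'I_n) (k : nat) : (a <= b)%N -> str_ab a b k \in STR a b.
Proof.
move=> ab; rewrite !inE; apply/andP; split.
  apply/forallP => x; apply/forallP => y; apply/implyP => xy; rewrite !ffunE.
  case: ifP; case: ifP => //= H1 H2; lia.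
by apply/forallP => x; rewrite ffunE; case: ifP; rewrite eqxx ?orbT.
Qed.

Lemma STR_str n (a b : 'I_n) f : (a < b)%N -> f \in STR a b ->
  exists2 k, (k <= n)%N & f = str_ab a b k.
Proof.
move=> ab; rewrite !inE => /andP[/forallP mon /forallP ab2].
set k := find (fun x : 'I_n => f x == b) (enum 'I_n).
exists k; first by rewrite /k; apply: leq_trans (find_size _ _) _; rewrite size_enum_ord.
apply/ffunP => x; rewrite ffunE.
case: ifP => xk.
  have := before_find x xk; rewrite nth_ord_enum.
  by case/orP: (ab2 x) => /eqP -> //; rewrite eqxx.
have kn : (k < n)%N by move: (ltn_ord x); lia.
have hh : has (fun x : 'I_n => f x == b) (enum 'I_n).
  by rewrite has_find size_enum_ord.
have := nth_find x hh; rewrite -/k.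
set y := nth x _ _.
have vy : (y : nat) = k by rewrite /y nth_enum_ord.
move=> /eqP fy.
have := forallP (mon y) x; rewrite vy leqNgt xk /= fy => bx.
case/orP: (ab2 x) => /eqP fx; last by apply: val_inj; rewrite fx.
by move: bx; rewrite fx; lia.
Qed.

Lemma card_count m (P : pred nat) : #|[set l : 'I_m | P l]| = count P (iota 0 m).
Proof.
rewrite cardsE cardE /enum_mem size_filter -enumT /=.
rewrite -val_enum_ord count_map; apply: eq_count => x; by rewrite !inE.
Qed.

Theorem proposition10 (n : nat) (a b : 'I_n) (hab : (a < b)%N) :
  [/\ subsemiring (IdSTR a b) (STR a b),
      IdSTR a b = [set f in STR a b | (mulE f f == f) && (f != cst a) && (f != cst b)]
    & #|IdSTR a b| = (b - a)%N].
Proof.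
have ab : (a <= b)%N by apply: ltnW.
have mulK : forall f g, f \in IdSTR a b -> g \in IdSTR a b -> mulE f g = f.
  move=> f g /imsetP[l1 + ->] /imsetP[l2 + ->]; rewrite !inE => /andP[h1 h2] /andP[h3 h4].
  apply/ffunP => x; rewrite !ffunE.
  by case: (x < l1)%N => /=; case: ifP => //; lia.
split.
- split.
  + by apply/subsetP => f /imsetP[l _ ->]; apply: str_in_STR.
  + move=> f g /imsetP[l1 + ->] /imsetP[l2 + ->]; rewrite !inE => /andP[h1 h2] /andP[h3 h4].
    have [le|lt] := leqP l1 l2.
      apply/imsetP; exists l1; first by rewrite inE h1 h2.
      apply/ffunP => x; rewrite !ffunE.
      by case: ifP; case: ifP; case: ifP => //; lia.
    apply/imsetP; exists l2; first by rewrite inE h3 h4.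
    apply/ffunP => x; rewrite !ffunE.
    by case: ifP; case: ifP; case: ifP => //; lia.
  + by move=> f g Hf Hg; rewrite mulK.
- apply/setP => f; rewrite !inE.
  apply/idP/idP.
  + move=> Hf; have Hf' := Hf; move: Hf' => /imsetP[l + Ef]; rewrite inE => /andP[h1 h2].
    rewrite (mulK _ _ Hf Hf) eqxx.
    have HS : f \in STR a b by rewrite Ef; apply: str_in_STR.
    move: HS; rewrite !inE => -> /=.
    apply/andP; split; apply/eqP => E.
      move: (congr1 (fun h : endo n => h b) E); rewrite Ef !ffunE ltnNge h2 /= => H.
      by move: hab; rewrite H ltnn.
    move: (congr1 (fun h : endo n => h a) E); rewrite Ef !ffunE h1 => H.
    by move: hab; rewrite H ltnn.
  + case/and3P => Hs /andP[/eqP idem nca] ncb.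
    have {}Hs : f \in STR a b by rewrite !inE.
    have [k kn Ef] := @STR_str n a b f hab Hs.
    have ev : forall x : 'I_n, f x = if (x < k)%N then a else b by move=> x; rewrite Ef ffunE.
    have idx : forall x, f (f x) = f x by move=> x; rewrite -[in RHS]idem ffunE.
    have k1 : (a < k)%N.
      rewrite ltnNge; apply/negP => ka.
      case: (posnP k) => k0.
        by move: ncb; rewrite Ef; apply/negP; rewrite negbK; apply/eqP/ffunP => x; rewrite !ffunE k0.
      have z : (0 < n)%N by move: (ltn_ord a); lia.
      have := idx (Ordinal z); rewrite !(ev (Ordinal z)) /= k0 ev ifN; last by lia.
      by move=> H; move: hab; rewrite H ltnn.
    have k2 : (k <= b)%N.
      rewrite leqNgt; apply/negP => bk.
      case: (ltngtP k n) => kn'; last first.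
        by move: nca; rewrite Ef; apply/negP; rewrite negbK; apply/eqP/ffunP => x; rewrite !ffunE kn' ltn_ord.
        by move: kn; lia.
      have := idx (Ordinal kn'); rewrite !(ev (Ordinal kn')) /= ltnn ev ifT; last by lia.
      by move=> H; move: hab; rewrite H ltnn.
    have kn1 : (k < n.+1)%N by [].
    apply/imsetP; exists (Ordinal kn1) => //; by rewrite inE /= k1 k2.
- rewrite card_in_imset.
    rewrite (@card_count n.+1 (fun l => a < l <= b)%N).
    have -> : n.+1 = (a.+1 + ((b - a) + (n.+1 - b.+1)))%N by move: (ltn_ord b); lia.
    rewrite !iotaD !count_cat.
    rewrite (@eq_in_count _ _ pred0 (iota 0 a.+1)); last first.
      by move=> x; rewrite mem_iota /=; lia.
    rewrite (@eq_in_count _ _ predT (iota (0 + a.+1) (b - a))); last first.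
      by move=> x; rewrite mem_iota /=; lia.
    rewrite (@eq_in_count _ _ pred0 (iota (0 + a.+1 + (b - a)) _)); last first.
      by move=> x; rewrite mem_iota /=; lia.
    rewrite !count_pred0 count_predT size_iota. by rewrite add0n addn0.
  move=> l1 l2; rewrite !inE => /andP[h1 h2] /andP[h3 h4] E.
  apply/val_inj/eqP; rewrite eqn_leq; apply/andP; split; rewrite leqNgt; apply/negP => lt.
    have bn : (l2 < n)%N by move: (ltn_ord b); lia.
    move: (congr1 (fun h : endo n => h (Ordinal bn)) E); rewrite !ffunE /= lt ltnn.
    by move=> H; move: hab; rewrite H ltnn.
  have bn : (l1 < n)%N by move: (ltn_ord b); lia.
  move: (congr1 (fun h : endo n => h (Ordinal bn)) E); rewrite !ffunE /= lt ltnn.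
  by move=> H; move: hab; rewrite H ltnn.
Qed.
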